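(* Let $B$ be a commutative ring with identity which is a pm-ring, and let $A$ be a dense subring of $B$. Then for any two distinct maximal ideals $M, M'$ of $B$, the set $(M\cap A)\cap(M'\cap A)$ does not contain any prime ideal of $A$.
   Context: All rings are commutative with identity; subrings contain the identity. A pm-ring is a ring in which every prime ideal is contained in a unique maximal ideal. A subring $A$ of $B$ is dense in $B$ if for every ideal $I$ of $B$ and every $b\in B\setminus \operatorname{rad}(I)$ there exists $a\in B\setminus\operatorname{rad}(I)$ with $ab\in A$. *)

(* Defs.v *)
From HB Require Import structures.
From mathcomp Require Import all_boot all_algebra.
Set Implicit Arguments. Unset Strict Implicit. Unset Printing Implicit Defensive.
Import GRing.Theory.
Local Open Scope ring_scope.

Definition is_subring (R : comPzRingType) (S : R -> Prop) : Prop :=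
  [/\ S 1, (forall x y, S x -> S y -> S (x - y)) &
      (forall x y, S x -> S y -> S (x * y))].

Definition is_ideal_in (R : comPzRingType) (S I : R -> Prop) : Prop :=
  [/\ (forall x, I x -> S x), I 0,
      (forall x y, I x -> I y -> I (x - y)) &
      (forall s x, S s -> I x -> I (s * x))].

Definition is_ideal (R : comPzRingType) (I : R -> Prop) : Prop :=
  is_ideal_in (fun _ => True) I.

Definition is_prime_ideal_in (R : comPzRingType) (S P : R -> Prop) : Prop :=
  [/\ is_ideal_in S P, ~ P 1 &
      (forall a b, S a -> S b -> P (a * b) -> P a \/ P b)].

Definition is_prime_ideal (R : comPzRingType) (P : R -> Prop) : Prop :=
  is_prime_ideal_in (fun _ => True) P.

Definition is_maximal_ideal (R : comPzRingType) (M : R -> Prop) : Prop :=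
  [/\ is_ideal M, ~ M 1 &
      (forall J : R -> Prop, is_ideal J -> (forall x, M x -> J x) ->
         (forall x, J x <-> M x) \/ J 1)].

Definition rad (R : comPzRingType) (I : R -> Prop) : R -> Prop :=
  fun b => exists n : nat, I (b ^+ n).

Definition pm_ring (R : comPzRingType) : Prop :=
  forall P : R -> Prop, is_prime_ideal P ->
    exists M : R -> Prop, [/\ is_maximal_ideal M, (forall x, P x -> M x) &
      forall M' : R -> Prop, is_maximal_ideal M' -> (forall x, P x -> M' x) ->
        forall x, M' x <-> M x].

Definition dense_subring (B : comPzRingType) (A : B -> Prop) : Prop :=
  forall I : B -> Prop, is_ideal I ->
    forall b, ~ rad I b -> exists a, ~ rad I a /\ A (a * b).

(* Main.v *)
Require Import Defs.
From mathcomp Require Import all_boot all_algebra.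
From mathcomp Require Import boolp classical_sets ring.
Local Open Scope ring_scope.
Import GRing.Theory.
Set Implicit Arguments.

Section Aux.
Variable B : comPzRingType.

Lemma max_prime (M : B -> Prop) : is_maximal_ideal M ->
  forall a b, M (a * b) -> M a \/ M b.
Proof.
case=> [[_ M0 MB MM] M1 Mmax] a b Mab.
case: (EM (M a)) => Ma; first by left.
right.
pose J := fun x => exists m r, M m /\ x = m + r * a.
have JI : is_ideal J.
  split => //.
  - by exists 0, 0; split => //; rewrite mul0r addr0.
  - move=> x y [m [r [Mm ->]]] [m' [r' [Mm' ->]]].
    exists (m - m'), (r - r'); split; first exact: MB.
    by rewrite mulrBl opprD !addrA; congr (_ + _); rewrite -!addrA; congr (_ + _); rewrite addrC.
  - move=> s x _ [m [r [Mm ->]]]; exists (s * m), (s * r); split; first exact: MM.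
    by rewrite mulrDr mulrA.
case: (Mmax J JI).
- move=> x Mx; exists x, 0; split => //; by rewrite mul0r addr0.
- move=> h; exfalso; apply: Ma; apply/h; exists 0, 1; split => //; by rewrite add0r mul1r.
- move=> [m [r [Mm e]]].
  have -> : b = m * b + r * (a * b) by rewrite mulrA -mulrDl -e mul1r.
  have Mneg : forall x y, M x -> M y -> M (x + y).
    move=> x y Mx My; have := MB x (0 - y) Mx (MB _ _ M0 My).
    by rewrite sub0r opprK.
  apply: Mneg; last exact: MM.
  by rewrite mulrC; apply: MM.
Qed.

Lemma prime_pow (M : B -> Prop) : is_maximal_ideal M ->
  forall s n, M (s ^+ n) -> M s.
Proof.
move=> hM s; elim=> [|n IH].
  by rewrite expr0 => h; case: hM => _ h1 _; exfalso.
rewrite exprS => /(max_prime hM) [] //; exact: IH.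
Qed.

Lemma ideal_add (I : B -> Prop) : is_ideal I -> forall x y, I x -> I y -> I (x + y).
Proof.
case=> _ I0 IB _ x y Ix Iy; have := IB x (0 - y) Ix (IB _ _ I0 Iy).
by rewrite sub0r opprK.
Qed.

(* key step: existence of a prime ideal inside M and M' unless S contains 0 *)
Lemma sep (M M' : B -> Prop) : pm_ring B -> is_maximal_ideal M -> is_maximal_ideal M' ->
  ~ (forall x, M x <-> M' x) ->
  exists s t, ~ M s /\ ~ M' t /\ s * t = 0.
Proof.
move=> pm hM hM' neq.
case: (EM (exists s t, ~ M s /\ ~ M' t /\ s * t = 0)) => // H; exfalso.
pose S := fun x => exists s t, ~ M s /\ ~ M' t /\ x = s * t.
have S0 : ~ S 0.
  by move=> [s [t [? [? e]]]]; apply: H; exists s, t.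
have SM : forall x y, S x -> S y -> S (x * y).
  move=> x y [s [t [Ms [Mt ->]]]] [s' [t' [Ms' [Mt' ->]]]].
  exists (s * s'), (t * t'); split; first by case/(max_prime hM).
  split; first by case/(max_prime hM').
  by rewrite mulrACA.
pose Pr := fun X : B -> Prop =>
  [/\ (forall x y, X x -> X y -> X (x - y)),
      (forall r x, X x -> X (r * x)) & (forall x, X x -> ~ S x)].
have [Q [[QB QM QS] Qmax]] : exists Q, Pr Q /\ (forall Y, proper Q Y -> ~ Pr Y).
  apply: Zorn_bigcup => F FP Ftot; rewrite /Pr; split.
  - move=> x y [X FX Xx] [Y FY Yy].
    case: (Ftot X Y FX FY) => sub.
    + by exists Y => //; case: (FP Y FY) => h _ _; apply: h => //; exact: sub.
    + by exists X => //; case: (FP X FX) => h _ _; apply: h => //; exact: sub.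
  - move=> r x [X FX Xx]; exists X => //; by case: (FP X FX) => _ h _; apply: h.
  - move=> x [X FX Xx]; by case: (FP X FX) => _ _ h; apply: h.
have Q0 : Q 0.
  case: (EM (Q 0)) => // nQ0; exfalso.
  apply: (Qmax (fun x => Q x \/ x = 0)).
    split; first by move=> x Qx; left.
    by move=> h; apply: nQ0; apply: h; right.
  rewrite /Pr; split.
  - move=> x y [Qx|->] [Qy|->].
    + by left; apply: QB.
    + by left; rewrite subr0.
    + by left; rewrite sub0r -mulN1r; apply: QM.
    + by right; rewrite subr0.
  - move=> r x [Qx|->]; first by left; apply: QM.
    by right; rewrite mulr0.
  - by move=> x [Qx|->] //; apply: QS.
have QA : forall x y, Q x -> Q y -> Q (x + y).
  move=> x y Qx Qy; have := QB x (0 - y) Qx (QB _ _ Q0 Qy).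
  by rewrite sub0r opprK.
have QP : is_prime_ideal Q.
  split.
  - split => //; by move=> s x _ Qx; apply: QM.
  - by move=> Q1; apply: (QS 1 Q1); exists 1, 1; case: hM => _ ? _; case: hM' => _ ? _;
       split => //; split => //; rewrite mulr1.
  - move=> a b _ _ Qab.
    case: (EM (Q a)) => Qa; first by left.
    case: (EM (Q b)) => Qb; first by right.
    exfalso.
    have ext : forall c, ~ Q c -> exists x r, S x /\ Q (x - r * c).
      move=> c Qc.
      pose J := fun x => exists r, Q (x - r * c).
      case: (EM (exists x r, S x /\ Q (x - r * c))) => // nE; exfalso.
      apply: (Qmax J).
        split; first by move=> x Qx; exists 0; rewrite mul0r subr0.
        by move=> h; apply: Qc; apply: h; exists 1; rewrite mul1r subrr.
      rewrite /Pr; split.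
      - move=> x y [r Hr] [r' Hr']; exists (r - r').
        have := QB _ _ Hr Hr'.
        by congr Q; ring.
      - move=> z x [r Hr]; exists (z * r); have := QM z _ Hr.
        by rewrite mulrBr mulrA.
      - by move=> x [r Hr] Sx; apply: nE; exists x, r.
    have [x [r [Sx Hx]]] := ext a Qa.
    have [y [r' [Sy Hy]]] := ext b Qb.
    apply: (QS (x * y)); last exact: SM.
    have -> : x * y = (x - r * a) * y + (r * a) * (y - r' * b) + (r * r') * (a * b).
      by ring.
    apply: (QA); last exact: QM.
    apply: (QA); first by rewrite mulrC; apply: QM.
    exact: QM.
have [N [hN QN Nuniq]] := pm Q QP.
have QM1 : forall x, Q x -> M x.
  move=> x Qx; case: (EM (M x)) => // Mx; exfalso.
  apply: (QS x Qx); exists x, 1; split => //; split; last by rewrite mulr1.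
  by case: hM' => _ ? _.
have QM2 : forall x, Q x -> M' x.
  move=> x Qx; case: (EM (M' x)) => // Mx; exfalso.
  apply: (QS x Qx); exists 1, x; split; first by case: hM => _ ? _.
  by split => //; rewrite mul1r.
apply: neq => x.
by rewrite (Nuniq M hM QM1) (Nuniq M' hM' QM2).
Qed.

End Aux.


Theorem theorem3p7 (B : comPzRingType) (A : B -> Prop) :
  pm_ring B -> is_subring A -> dense_subring A ->
  forall M M' : B -> Prop, is_maximal_ideal M -> is_maximal_ideal M' ->
    ~ (forall x, M x <-> M' x) ->
    ~ exists P : B -> Prop, is_prime_ideal_in A P /\
        (forall x, P x -> (M x /\ A x) /\ (M' x /\ A x)).
Proof.
move=> pm sub dense M M' hM hM' neq [P [[[PA P0 _ _] _ Pprime] PMM]].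
have [s [t [Ms [Mt st0]]]] := sep pm hM hM' neq.
have [a [Ra Aas]] : exists a, ~ Defs.rad M a /\ A (a * s).
  apply: (dense); first by case: hM.
  by move=> [n Mn]; apply: Ms; apply: (prime_pow hM _ _ Mn).
have [a' [Ra' Aat]] : exists a, ~ Defs.rad M' a /\ A (a * t).
  apply: (dense); first by case: hM'.
  by move=> [n Mn]; apply: Mt; exact: (prime_pow hM' _ _ Mn).
have Ma : ~ M a by move=> h; apply: Ra; exists 1%N; rewrite expr1.
have Ma' : ~ M' a' by move=> h; apply: Ra'; exists 1%N; rewrite expr1.
have e : (a * s) * (a' * t) = 0.
  have -> : (a * s) * (a' * t) = (a * a') * (s * t) by ring.
  by rewrite st0 mulr0.
case: (Pprime _ _ Aas Aat); first by rewrite e.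
- by move=> /PMM [[/(max_prime hM) [] //]].
- by move=> /PMM [_ [/(max_prime hM') [] //]].
Qed.
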